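(* Both \textsc{Greedy Min-Sum} and \textsc{Greedy Min-Max} have competitive ratio $\Omega(n)$ with respect to the \textsc{Min-Max} objective, where $n$ is the number of agents.
   Context: An instance $\mathcal{I}=(N,P,T,(\mathbf{D}_i)_{i\in N})$ has agents $N=[n]$, projects $P=\{p_1,\dots,p_m\}$, timesteps $T=[\ell]$, and disapproval sets $D_{ik}\subseteq P$. An outcome is $\mathbf{o}\in P^\ell$, $\mathbf{o}^{(k)}=(o_1,\dots,o_k)$, $d_i(\mathbf{o}^{(k)})=|\{t\in[k]:o_t\in D_{it}\}|$, $d_i(\mathbf{o})=d_i(\mathbf{o}^{(\ell)})$. An online algorithm chooses each $o_k$ based only on $(D_{it})_{i\in N,t\in[k]}$. \textsc{Greedy Min-Sum} picks at each timestep $k$ a project minimizing $|\{i:p\in D_{ik}\}|$ (ties broken lexicographically by $p_1,\dots,p_m$). \textsc{Greedy Min-Max} picks at each timestep $k$ a project $o_k$ minimizing $\max_{i\in N}d_i(\mathbf{o}^{(k)})$ given the already chosen $o_1,\dots,o_{k-1}$ (ties broken lexicographically). The competitive ratio of an online algorithm $\mathcal{B}$ with respect to \textsc{Min-Max} is $\sup_{\mathcal{I}}\frac{\max_i d_i(\mathcal{B}(\mathcal{I}))}{\min_{\mathbf{o}}\max_i d_i(\mathbf{o})}$, considered as a function of $n$. *)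

(* Defs.v *)
From mathcomp Require Import all_boot.
Set Implicit Arguments. Unset Strict Implicit. Unset Printing Implicit Defensive.

(* An instance with agents N = 'I_n, projects P = 'I_m.+1 (nonempty, ordered
   p_1 < ... < p_m by ordinal order), timesteps T = 'I_l, and disapproval sets
   D t i = D_{i t} (a subset of P). *)
Section Defs.
Variables (n m l : nat).
Notation agent := 'I_n.
Notation project := 'I_m.+1.
Notation time := 'I_l.
Notation instance := (time -> agent -> {set project}).
Notation outcome := {ffun time -> project}.

(* d_i(o^(k)) : number of timesteps t < k (0-based) where o_t is disapproved by i *)
Definition dis_prefix (D : instance) (o : outcome) (k : nat) (i : agent) : nat :=
  #|[set t : time | (t < k) && (o t \in D t i)]|.

Definition dis (D : instance) (o : outcome) (i : agent) : nat :=
  dis_prefix D o l i.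

(* max_i d_i(o) (0 if there are no agents) *)
Definition maxdis (D : instance) (o : outcome) : nat := \max_(i < n) dis D o i.

Definition lexargmin (F : project -> nat) : project :=
  odflt ord0 [pick p | [forall q, (F p < F q) || ((F p == F q) && (p <= q))]].

Definition minmax_opt (D : instance) : nat :=
  maxdis D [arg min_(o < [ffun=> ord0] : outcome) maxdis D o].

Definition greedy_minsum (D : instance) : outcome :=
  [ffun k => lexargmin (fun p => #|[set i | p \in D k i]|)].

Definition set_at (o : outcome) (k : nat) (p : project) : outcome :=
  [ffun t => if val t == k then p else o t].

Fixpoint greedy_minmax_aux (D : instance) (k : nat) : outcome :=
  match k with
  | 0 => [ffun=> ord0]
  | k'.+1 =>
      let o := greedy_minmax_aux D k' in
      set_at o k'
        (lexargmin (fun p => \max_(i < n) dis_prefix D (set_at o k' p) k'.+1 i))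
  end.

Definition greedy_minmax (D : instance) : outcome := greedy_minmax_aux D l.

End Defs.

(* Algorithm B has competitive ratio Omega(n) w.r.t. Min-Max: there is a constant
   c > 0 (ratio >= n / c) such that for all large enough n there is an instance
   with n agents whose ratio  maxdis(B(I)) / OPT  is at least n / c
   (with x / 0 = +oo for x > 0). *)
Definition omega_n_ratio
  (B : forall n m l, ('I_l -> 'I_n -> {set 'I_m.+1}) -> {ffun 'I_l -> 'I_m.+1}) : Prop :=
  exists c : nat, 0 < c /\ exists n0 : nat, forall n : nat, n0 <= n ->
    exists (m l : nat) (D : 'I_l -> 'I_n -> {set 'I_m.+1}),
      0 < maxdis D (B n m l D) /\ n * minmax_opt D <= c * maxdis D (B n m l D).

(* Main.v *)
Require Import Defs.
From mathcomp Require Import all_boot.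

Lemma lexargmin0 m (F : 'I_m.+1 -> nat) :
  (forall q, F ord0 <= F q) -> lexargmin F = ord0.
Proof.
move=> H; rewrite /lexargmin.
case: pickP => [p /forallP Hp | /(_ ord0) /=]; last first.
  by [].
apply/val_inj => /=; move: (Hp ord0); rewrite /=.
case/orP; first by rewrite ltnNge H.
by case/andP=> _; rewrite leqn0 => /eqP.
Qed.

Lemma opt_le n m l (D : 'I_l -> 'I_n -> {set 'I_m.+1}) o : minmax_opt D <= maxdis D o.
Proof. rewrite /minmax_opt; case: arg_minnP => // x _; exact. Qed.

Definition Dsum n : 'I_n -> 'I_n -> {set 'I_2} :=
  fun t i => [set p : 'I_2 | ((p == ord0) && (val i == 0)) || ((p != ord0) && (val i == val t))].

Definition Dmax n : 'I_n -> 'I_n -> {set 'I_2} :=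
  fun t i => if val i == val t then setT else [set ord0].

Lemma card_eqval n (j : nat) (hj : j < n) : #|[set i : 'I_n | val i == j]| = 1.
Proof.
rewrite -(cards1 (Ordinal hj)); apply: eq_card => i.
by rewrite !inE -val_eqE.
Qed.

Lemma const1_dis n (D : 'I_n -> 'I_n -> {set 'I_2}) :
  (forall t i, (ord_max \in D t i) = (val i == val t)) ->
  maxdis D [ffun=> ord_max] <= 1.
Proof.
move=> HD; apply/bigmax_leqP => i _.
rewrite /dis /dis_prefix.
have -> : [set t : 'I_n | (t < n) && ([ffun=> ord_max] t \in D t i)]
        = [set t : 'I_n | val t == val i].
  by apply/setP => t; rewrite !inE ltn_ord ffunE HD eq_sym.
by rewrite card_eqval ?ltn_ord.
Qed.

Lemma const0_dis n (D : 'I_n -> 'I_n -> {set 'I_2}) (a : 'I_n) :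
  (forall t, ord0 \in D t a) ->
  n <= maxdis D [ffun=> ord0].
Proof.
move=> HD; apply: (leq_trans _ (leq_bigmax a)).
rewrite /dis /dis_prefix.
have -> : [set t : 'I_n | (t < n) && ([ffun=> ord0] t \in D t a)] = setT.
  by apply/setP => t; rewrite !inE ltn_ord ffunE HD.
by rewrite cardsT card_ord.
Qed.

Lemma minsum_const n : greedy_minsum (Dsum n) = [ffun=> ord0].
Proof.
apply/ffunP => t; rewrite !ffunE; apply: lexargmin0 => q.
case: (eqVneq q ord0) => [->//|Hq].
have -> : [set i : 'I_n | (ord0 : 'I_2) \in Dsum n t i] = [set i : 'I_n | val i == 0].
  by apply/setP => i; rewrite !inE eqxx /= orbF.
rewrite card_eqval; last by case: t => t /= Ht; apply: leq_ltn_trans Ht.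
have -> : [set i : 'I_n | q \in Dsum n t i] = [set i : 'I_n | val i == val t].
  by apply/setP => i; rewrite !inE Hq (negbTE Hq).
by rewrite card_eqval ?ltn_ord.
Qed.

Lemma set_at0 l k : set_at (m:=1) (l:=l) [ffun=> ord0] k ord0 = [ffun=> ord0] :> {ffun 'I_l -> 'I_2}.
Proof. by apply/ffunP => t; rewrite !ffunE; case: ifP. Qed.

Lemma minmax_aux n k : k <= n -> greedy_minmax_aux (Dmax n) k = [ffun=> ord0].
Proof.
elim: k => [|k IH] Hk //=.
rewrite IH ?(ltnW Hk) //.
rewrite lexargmin0; first exact: set_at0.
move=> q.
set C := #|[set t : 'I_n | t < k.+1]|.
apply: (@leq_trans C).
  apply/bigmax_leqP => i _; apply: subset_leq_card; apply/subsetP => t.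
  by rewrite !inE => /andP[].
apply: (leq_trans _ (leq_bigmax (Ordinal Hk))).
rewrite /dis_prefix /C; apply: subset_leq_card; apply/subsetP => t.
rewrite !inE => Ht; rewrite Ht /= !ffunE /Dmax /=.
case: ifP => /eqP H1; case: eqP => H2; rewrite ?inE //.
by case: H2.
Qed.

Theorem proposition3 :
  omega_n_ratio greedy_minsum /\ omega_n_ratio greedy_minmax.
Proof.
split; exists 1; split => //; exists 1 => n Hn; exists 1, n.
- exists (Dsum n); rewrite minsum_const.
  have H0 : n <= maxdis (Dsum n) [ffun=> ord0].
    apply: (@const0_dis n (Dsum n) (Ordinal Hn)) => t; by rewrite /Dsum inE eqxx.
  split; first by apply: leq_trans H0.
  rewrite mul1n; apply: leq_trans H0.
  apply: (@leq_trans (n * 1)); last by rewrite muln1.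
  apply: leq_mul => //.
  apply: leq_trans (opt_le n 1 n (Dsum n) [ffun=> ord_max]) _.
  by apply: const1_dis => t i; rewrite /Dsum !inE.
- exists (Dmax n); rewrite /greedy_minmax minmax_aux //.
  have H0 : n <= maxdis (Dmax n) [ffun=> ord0].
    apply: (@const0_dis n (Dmax n) (Ordinal Hn)) => t; rewrite /Dmax; by case: ifP; rewrite inE.
  split; first by apply: leq_trans H0.
  rewrite mul1n; apply: leq_trans H0.
  apply: (@leq_trans (n * 1)); last by rewrite muln1.
  apply: leq_mul => //.
  apply: leq_trans (opt_le n 1 n (Dmax n) [ffun=> ord_max]) _.
  apply: const1_dis => t i; rewrite /Dmax; case: ifP => _; by rewrite inE.
Qed.
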